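(* Let $C\subset\mathbb{R}^d$ be a convex body and let $\Lambda\subset\mathbb{R}^d$ be a $d$-dimensional lattice. The following are equivalent: (1) $C$ is lattice reduced with respect to $\Lambda$; (2) for every exposed point $p$ of $C$ there exists a width direction $y\in\Lambda^\star$ of $C$ such that $y\cdot p>y\cdot x$ for all $x\in C\setminus\{p\}$.
   Context: A convex body is a compact convex set with non-empty interior. An exposed point of $C$ is a point $p$ such that $C\cap H=\{p\}$ for some supporting hyperplane $H$ of $C$. A lattice $\Lambda\subset\mathbb{R}^d$ is a discrete subgroup spanning $\mathbb{R}^d$; $\Lambda^\star=\{y: x\cdot y\in\mathbb{Z}\ \forall x\in\Lambda\}$. The lattice width is $\mathrm{wdt}_\Lambda(C)=\min_{y\in\Lambda^\star\setminus\{0\}}\max_{a,b\in C}y\cdot(a-b)$; a width direction is a $y\in\Lambda^\star\setminus\{0\}$ attaining this minimum. $C$ is lattice reduced if no convex body $C'\subsetneq C$ has $\mathrm{wdt}_\Lambda(C')=\mathrm{wdt}_\Lambda(C)$. *)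

(* Defs.v *)
From HB Require Import structures.
From mathcomp Require Import all_boot all_order all_algebra.
From mathcomp Require Import all_classical all_reals all_analysis.
Set Implicit Arguments. Unset Strict Implicit. Unset Printing Implicit Defensive.
Import Order.TTheory GRing.Theory Num.Theory.
Import numFieldNormedType.Exports.
Local Open Scope classical_set_scope.
Local Open Scope ring_scope.

Section Defs.
Variables (R : realType) (d : nat).
Notation V := 'rV[R]_d.

Definition dot (x y : V) : R := \sum_(i < d) x ord0 i * y ord0 i.

Definition convex_set (C : set V) : Prop :=
  forall x y t, C x -> C y -> 0 <= t <= 1 -> C (t *: x + (1 - t) *: y).

Definition convex_body (C : set V) : Prop :=
  [/\ convex_set C, compact C & exists x, interior C x].

Definition is_lattice (L : set V) : Prop :=
  [/\ L 0, (forall x y, L x -> L y -> L (x - y)),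
      (forall x, L x -> exists2 e : R, 0 < e &
           forall y, L y -> `|y - x| < e -> y = x) &
      (forall v : V, exists n (c : 'I_n -> R) (w : 'I_n -> V),
           (forall i, L (w i)) /\ v = \sum_(i < n) c i *: w i)].

Definition dual_lattice (L : set V) : set V :=
  [set y | forall x, L x -> exists z : int, dot x y = z%:~R].

Definition width_dir (C : set V) (y : V) : R :=
  sup [set dot y (a - b) | a in C & b in C].

Definition lattice_width (L C : set V) : R :=
  inf [set width_dir C y | y in [set y | dual_lattice L y /\ y != 0]].

Definition width_direction (L C : set V) (y : V) : Prop :=
  [/\ dual_lattice L y, y != 0 & width_dir C y = lattice_width L C].

Definition lattice_reduced (L C : set V) : Prop :=
  forall C' : set V, convex_body C' -> C' `<` C ->
    lattice_width L C' <> lattice_width L C.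

Definition supporting_hyperplane (C : set V) (u : V) (c : R) : Prop :=
  [/\ u != 0, (forall x, C x -> dot u x <= c) & exists x, C x /\ dot u x = c].

Definition exposed_point (C : set V) (p : V) : Prop :=
  exists u c, supporting_hyperplane C u c /\
    C `&` [set x | dot u x = c] = [set p].

End Defs.

(* Main.v *)
Require Import Defs.
From HB Require Import structures.
From mathcomp Require Import all_boot all_order all_algebra.
From mathcomp Require Import all_classical all_reals all_analysis.
From mathcomp Require Import lra ring zify.
Import Order.TTheory GRing.Theory Num.Theory.
Import numFieldNormedType.Exports.
Local Open Scope classical_set_scope.
Local Open Scope ring_scope.

Set Implicit Arguments. Unset Printing Implicit Defensive.
Section S.
Variables (R : realType) (d : nat).
Notation V := 'rV[R]_d.
Implicit Types (x y z u : V) (C : set V).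

Lemma dotC x y : dot x y = dot y x.
Proof. by apply: eq_bigr => i _; rewrite mulrC. Qed.
Lemma dotDl x y z : dot (x + y) z = dot x z + dot y z.
Proof. by rewrite /dot -big_split; apply: eq_bigr => i _; rewrite mxE mulrDl. Qed.
Lemma dotDr x y z : dot z (x + y) = dot z x + dot z y.
Proof. by rewrite dotC dotDl !(dotC z). Qed.
Lemma dotZl (a : R) x y : dot (a *: x) y = a * dot x y.
Proof. by rewrite /dot mulr_sumr; apply: eq_bigr => i _; rewrite mxE mulrA. Qed.
Lemma dotZr (a : R) x y : dot y (a *: x) = a * dot y x.
Proof. by rewrite dotC dotZl dotC. Qed.
Lemma dotNl x y : dot (- x) y = - dot x y.
Proof. by rewrite -scaleN1r dotZl mulN1r. Qed.
Lemma dotNr x y : dot y (- x) = - dot y x.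
Proof. by rewrite dotC dotNl dotC. Qed.
Lemma dotBl x y z : dot (x - y) z = dot x z - dot y z.
Proof. by rewrite dotDl dotNl. Qed.
Lemma dotBr x y z : dot z (x - y) = dot z x - dot z y.
Proof. by rewrite dotDr dotNr. Qed.
Lemma dot0l x : dot 0 x = 0.
Proof. by rewrite /dot big1 // => i _; rewrite mxE mul0r. Qed.
Lemma dot0r x : dot x 0 = 0.
Proof. by rewrite dotC dot0l. Qed.
Lemma dot_ge0 x : 0 <= dot x x.
Proof. by apply: sumr_ge0 => i _; rewrite -expr2 sqr_ge0. Qed.
Lemma dot_eq0 x : dot x x = 0 -> x = 0.
Proof.
move=> /eqP; rewrite psumr_eq0; last by move=> i _; rewrite -expr2 sqr_ge0.
move=> /allP H; apply/rowP => i; rewrite mxE.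
have := H i (mem_index_enum _); rewrite -expr2 sqrf_eq0 => /eqP.
by rewrite (ord1 (ord0 : 'I_1)).
Qed.
Lemma dot_gt0 x : x != 0 -> 0 < dot x x.
Proof. by move=> x0; rewrite lt_def dot_ge0 andbT; apply/eqP => /dot_eq0/eqP; rewrite (negbTE x0). Qed.

Lemma sum_cont (I : Type) (r : seq I) (P : pred I) (F : I -> V -> R) :
  (forall i, continuous (F i)) -> continuous (fun x => \sum_(i <- r | P i) F i x).
Proof.
move=> Fc; elim: r => [|i r IH].
  by under eq_fun do rewrite big_nil; apply: cst_continuous.
case Pi: (P i).
  under eq_fun do rewrite big_cons Pi.
  by move=> x; apply: continuousD; [apply: Fc|apply: IH].
by under eq_fun do rewrite big_cons Pi.
Qed.

Lemma dot_cont y : continuous (fun x : V => dot y x).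
Proof.
apply: sum_cont => i x; apply: continuousM; first exact: cst_continuous.
exact: (@coord_continuous R 1 d ord0 i).
Qed.

Arguments dot_cont : clear implicits.
Lemma dot_cont2 z : continuous (fun x : V => dot (x - z) (x - z)).
Proof.
apply: sum_cont => i.
have h : continuous (fun x : V => (x - z) ord0 i).
  have -> : (fun x : V => (x - z) ord0 i) = (fun x : V => x ord0 i - z ord0 i).
    by apply/funext => x; rewrite !mxE.
  move=> x; apply: continuousB; [exact: (@coord_continuous R 1 d ord0 i)|exact: cst_continuous].
by move=> x; apply: continuousM; apply: h.
Qed.

Arguments dot_cont2 : clear implicits.
Lemma evt_max C (f : V -> R) : C !=set0 -> compact C -> continuous f ->
  exists2 a, C a & forall x, C x -> f x <= f a.
Proof.
move=> C0 cC cf.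
have [a aC H] := compact_EVT_max C0 cC (@continuous_subspaceT _ _ C f cf).
by exists a; [exact: set_mem | move=> x Cx; apply: H; exact: mem_set].
Qed.

Lemma evt_min C (f : V -> R) : C !=set0 -> compact C -> continuous f ->
  exists2 a, C a & forall x, C x -> f a <= f x.
Proof.
move=> C0 cC cf.
have [a aC H] := compact_EVT_min C0 cC (@continuous_subspaceT _ _ C f cf).
by exists a; [exact: set_mem | move=> x Cx; apply: H; exact: mem_set].
Qed.

Lemma sup_is_max (E : set R) m : E m -> (forall e, E e -> e <= m) -> sup E = m.
Proof.
move=> Em ub; apply/eqP; rewrite eq_le; apply/andP; split.
  by apply: ge_sup; [exists m | exact: ub].
by apply: sup_upper_bound => //; split; [exists m | exists m].
Qed.

Lemma width_eq C y a b : C a -> C b ->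
  (forall x, C x -> dot y x <= dot y a) -> (forall x, C x -> dot y b <= dot y x) ->
  width_dir C y = dot y a - dot y b.
Proof.
move=> Ca Cb ha hb; rewrite /width_dir; apply: sup_is_max.
  by exists a => //; exists b => //; rewrite dotBr.
move=> e [a' Ca' [b' Cb' <-]]; rewrite dotBr.
by apply: lerB; [apply: ha | apply: hb].
Qed.

Lemma width_ex C y : C !=set0 -> compact C ->
  exists a b, [/\ C a, C b, (forall x, C x -> dot y x <= dot y a),
     (forall x, C x -> dot y b <= dot y x) & width_dir C y = dot y a - dot y b].
Proof.
move=> C0 cC.
have [a Ca ha] := evt_max C0 cC (dot_cont y).
have [b Cb hb] := evt_min C0 cC (dot_cont y).
by exists a, b; split => //; apply: width_eq.
Qed.

Lemma width_ge0 C y : C !=set0 -> compact C -> 0 <= width_dir C y.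
Proof.
move=> C0 cC; have [a [b [Ca Cb ha hb ->]]] := width_ex y C0 cC.
by rewrite subr_ge0; apply: ha.
Qed.

Lemma width_sub A B y : A !=set0 -> compact A -> compact B -> A `<=` B ->
  width_dir A y <= width_dir B y.
Proof.
move=> A0 cA cB AB.
have B0 : B !=set0 by case: A0 => x /AB; exists x.
have [a [b [Ca Cb ha hb ->]]] := width_ex y A0 cA.
have [a' [b' [Ca' Cb' ha' hb' ->]]] := width_ex y B0 cB.
by apply: lerB; [apply: ha'; apply: AB | apply: hb'; apply: AB].
Qed.

Lemma widthN C y : C !=set0 -> compact C -> width_dir C (- y) = width_dir C y.
Proof.
move=> C0 cC; have [a [b [Ca Cb ha hb ->]]] := width_ex y C0 cC.
rewrite (@width_eq C (- y) b a) //.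
- by rewrite !(dotC (- y)) !dotNr !(dotC _ y) opprK addrC.
- by move=> x Cx; rewrite !(dotC (- y)) !dotNr lerN2 !(dotC _ y); apply: hb.
- by move=> x Cx; rewrite !(dotC (- y)) !dotNr lerN2 !(dotC _ y); apply: ha.
Qed.

Lemma dot_sq (a b : V) : dot (a + b) (a + b) = dot a a + 2 * dot a b + dot b b.
Proof. by rewrite !dotDl !dotDr (dotC b a); ring. Qed.

Lemma farthest_exposed C z p : C p -> p != z ->
  (forall x, C x -> dot (x - z) (x - z) <= dot (p - z) (p - z)) ->
  exposed_point C p.
Proof.
move=> Cp pz H; exists (p - z), (dot (p - z) p).
have key : forall x, C x -> dot (x - p) (x - p) + 2 * (dot (p - z) x - dot (p - z) p) <= 0.
  move=> x Cx; have := H x Cx.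
  have -> : x - z = (x - p) + (p - z) by rewrite addrA subrK.
  rewrite dot_sq (dotC (x - p) (p - z)) [dot (p - z) (x - p)]dotBr; lra.
split; first split.
- by rewrite subr_eq0.
- move=> x Cx; have := key x Cx; have := dot_ge0 (x - p); lra.
- by exists p.
- apply/seteqP; split => x /=.
    move=> [Cx /= ex]; have := key x Cx; rewrite ex subrr mulr0 addr0 => h.
    have h0 : dot (x - p) (x - p) = 0 by apply/eqP; rewrite eq_le h dot_ge0.
    by have /eqP := dot_eq0 h0; rewrite subr_eq0 => /eqP.
  by move=> ->; split.
Qed.

Lemma nearest_var C q p : Defs.convex_set C -> C p ->
  (forall x, C x -> dot (p - q) (p - q) <= dot (x - q) (x - q)) ->
  forall x, C x -> dot (q - p) (x - p) <= 0.
Proof.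
move=> cvx Cp H x Cx.
set A := dot (p - q) (x - p); set B := dot (x - p) (x - p).
have HB : 0 <= B by apply: dot_ge0.
have Ht : forall t : R, 0 < t <= 1 -> 0 <= t * B + 2 * A.
  move=> t /andP[t0 t1].
  have Cxt := cvx x p t Cx Cp (andb_true_intro (conj (ltW t0) t1)).
  have := H _ Cxt.
  have -> : t *: x + (1 - t) *: p - q = t *: (x - p) + (p - q).
    by apply/rowP => i; rewrite !mxE; ring.
  rewrite [X in _ <= X]dot_sq !dotZl !dotZr (dotC (x - p)) -/A -/B => h.
  have : 0 <= t * (t * B + 2 * A) by lra.
  by rewrite pmulr_rge0.
have -> : dot (q - p) (x - p) = - A by rewrite /A -dotNl opprB.
rewrite oppr_le0; apply/negP => /negP; rewrite -ltNge => A0.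
have BA : 0 < B - A by lra.
set t := - A / (B - A).
have t0 : 0 < t by rewrite divr_gt0 // oppr_gt0.
have t1 : t <= 1 by rewrite ler_pdivrMr // mul1r; lra.
have tBA : t * (B - A) = - A by rewrite /t mulrVK // unitfE gt_eqF.
have := Ht t (andb_true_intro (conj t0 t1)).
have : t * B = - A + t * A by rewrite -tBA; ring.
have : 0 < t * (- A) by rewrite mulr_gt0 // oppr_gt0.
nra.
Qed.

Lemma cb_nonempty C : convex_body C -> C !=set0.
Proof. by case=> _ _ [x /nbhs_singleton Cx]; exists x. Qed.

Lemma exposed_outside C C' : convex_body C -> convex_body C' -> C' `<` C ->
  exists p, exposed_point C p /\ ~ C' p.
Proof.
move=> cb cb' [sub nsub].
have [q Cq nC'q] : exists2 q, C q & ~ C' q.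
  apply: contrapT => H; apply: nsub => x Cx; apply: contrapT => nx; apply: H; by exists x.
have [_ cC _] := cb; have [cvx' cC' _] := cb'.
have C0 := cb_nonempty cb; have C'0 := cb_nonempty cb'.
have [pi C'pi hpi] := evt_min C'0 cC' (dot_cont2 q).
have var := @nearest_var C' q pi cvx' C'pi hpi.
set u := q - pi.
have u0 : u != 0 by rewrite subr_eq0; apply/eqP => E; apply: nC'q; rewrite E.
have uu := dot_gt0 u u0.
set m := dot u pi.
have hm : forall x, C' x -> dot u x <= m.
  by move=> x /var; rewrite dotBr subr_le0.
have hq : dot u q = m + dot u u by rewrite /m /u dotBr; ring.
have [qq Cqq hD] := evt_max C0 cC (dot_cont2 q).
set D := dot (qq - q) (qq - q).
have D0 : 0 <= D by apply: dot_ge0.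
set t := (D + 1) / (2 * dot u u).
have t0 : 0 < t by rewrite divr_gt0 //; lra.
have t2 : t * (2 * dot u u) = D + 1 by rewrite /t mulrVK // unitfE; lra.
set z := q - t *: u.
have [p Cp hp] := evt_max C0 cC (dot_cont2 z).
have expand : forall x, dot (x - z) (x - z) =
    dot (x - q) (x - q) + 2 * t * (dot u x - dot u q) + t * t * dot u u.
  move=> x; have -> : x - z = (x - q) + t *: u by apply/rowP => i; rewrite /z !mxE; ring.
  by rewrite dot_sq dotZr dotZl dotZr (dotC (x - q) u) [dot u (x - q)]dotBr; ring.
have hpq : 0 <= dot (p - q) (p - q) + 2 * t * (dot u p - dot u q).
  by have := hp q Cq; rewrite !expand subrr dot0l; lra.
have hpD : dot (p - q) (p - q) <= D := hD p Cp.
have upm : m < dot u p.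
  rewrite ltNge; apply/negP => upm.
  have : dot u p - dot u q <= - dot u u by rewrite hq; lra.
  have h1 : t * (dot u p - dot u q + dot u u) <= 0.
    by rewrite pmulr_rle0 //; lra.
  nra.
exists p; split; last by move=> /hm; lra.
apply: (@farthest_exposed C z p Cp _ hp).
apply/eqP => pz.
have : 0 < t * t * dot u u by rewrite mulr_gt0 // mulr_gt0.
have : dot (p - z) (p - z) = 0 by rewrite pz subrr dot0l.
rewrite expand => E.
have := dot_ge0 (p - q); nra.
Qed.

Lemma exposed_in C p : exposed_point C p -> C p.
Proof. by move=> [u [c [_ E]]]; have : [set p] p by []; rewrite -E => -[]. Qed.

Lemma lw_le (L : set V) C y : C !=set0 -> compact C -> dual_lattice L y -> y != 0 ->
  lattice_width L C <= width_dir C y.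
Proof.
move=> C0 cC dy y0; rewrite /lattice_width.
apply: ge_inf; last by exists y.
by exists 0 => _ [y' _ <-]; apply: width_ge0.
Qed.

Lemma dir21 (L : set V) C : convex_body C ->
  (forall p, exposed_point C p -> exists y, width_direction L C y /\
     (forall x, C x -> x != p -> dot y x < dot y p)) -> lattice_reduced L C.
Proof.
move=> cb H C' cb' prop eqw.
have [p [ex nC'p]] := exposed_outside cb cb' prop.
have Cp := exposed_in ex.
have [y [[dy y0 wy] strict]] := H p ex.
have [_ cC _] := cb; have [_ cC' _] := cb'.
have [a' [b' [Ca' Cb' ha' hb' W']]] := width_ex y (cb_nonempty cb') cC'.
have [a [b [Ca Cb ha hb W]]] := width_ex y (cb_nonempty cb) cC.
have sub := prop.1.
have lt1 : dot y a' < dot y p.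
  by apply: strict; [exact: sub | apply/eqP => E; apply: nC'p; rewrite -E].
have lt2 : width_dir C' y < width_dir C y.
  rewrite W' W; have := ha p Cp; have := hb b' (sub _ Cb'); lra.
have := lw_le (cb_nonempty cb') cC' dy y0.
lra.
Qed.

Lemma interior_ball C x0 : interior C x0 ->
  exists2 r : R, 0 < r & forall v : V, `|v| < r -> C (x0 + v).
Proof.
move=> /nbhs_ballP [r r0 H]; exists r => // v hv; apply: H.
by rewrite -ball_normE /ball_ /= opprD addrA subrr add0r normrN.
Qed.

Lemma interior_dir C x0 (w : V) : interior C x0 ->
  exists2 s : R, 0 < s & C (x0 + s *: w) /\ C (x0 - s *: w).
Proof.
move=> /interior_ball [r r0 H].
have w1 : 0 < `|w| + 1 by rewrite ltr_pwDr.
exists (r / (2 * (`|w| + 1))); first by rewrite divr_gt0 // mulr_gt0.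
have hs : `|(r / (2 * (`|w| + 1))) *: w| < r.
  rewrite normrZ ger0_norm; last by rewrite divr_ge0 // ?ltW // mulr_gt0.
  rewrite mulrC mulrA ltr_pdivrMr ?mulr_gt0 //.
  have := normr_ge0 w; nra.
split; apply: H => //; by rewrite normrN.
Qed.

Lemma halfspace_closed u (a : R) : closed [set x : V | dot u x <= a].
Proof.
have -> : [set x : V | dot u x <= a] = (fun x => dot u x) @^-1` [set r | r <= a] by [].
apply: preimage_closed; last exact: closed_le.
by move=> x _; apply: dot_cont.
Qed.

Lemma halfspace_open u (a : R) : open [set x : V | dot u x < a].
Proof.
have -> : [set x : V | dot u x < a] = (fun x => dot u x) @^-1` [set r | r < a] by [].
apply: open_comp; last exact: open_lt.
by move=> x _; apply: dot_cont.
Qed.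

Lemma dot_comb u x y (t : R) : dot u (t *: x + (1 - t) *: y) = t * dot u x + (1 - t) * dot u y.
Proof. by rewrite dotDr !dotZr. Qed.

Lemma cut_body C u (c e : R) x0 : convex_body C -> interior C x0 -> dot u x0 < c - e ->
  convex_body (C `&` [set x | dot u x <= c - e]).
Proof.
move=> [cvx cC _] ix0 hx0; split.
- move=> x y t [Cx hx] [Cy hy] /andP[t0 t1]; split; first by apply: cvx => //; rewrite t0 t1.
  rewrite /= dot_comb.
  have : 0 <= 1 - t by lra.
  move: hx hy => /= hx hy h1t; nra.
- exact: compact_closedI cC (halfspace_closed u (c - e)).
- exists x0; rewrite interiorI; split => //.
  apply: (@filterS _ _ _ [set x | dot u x < c - e]).
    by move=> x /= /ltW.
  by apply: open_nbhs_nbhs; split; [exact: halfspace_open|].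
Qed.

Lemma cut_compact C u (a : R) : compact C -> compact (C `&` [set x | dot u x <= a]).
Proof. by move=> cC; exact: compact_closedI cC (halfspace_closed u a). Qed.

Lemma shrink C u (c t : R) x0 y : convex_body C -> C x0 ->
  (forall x, C x -> dot u x <= c) -> 0 <= t <= 1 ->
  (1 - t) * width_dir C y <=
  width_dir (C `&` [set x | dot u x <= c - t * (c - dot u x0)]) y.
Proof.
move=> cb Cx0 hc /andP[t0 t1].
have [cvx cC _] := cb.
set Ce := C `&` _.
have hx0 := hc x0 Cx0.
have Ce0 : Ce !=set0.
  by exists x0; split => //=; nra.
have cCe : compact Ce by exact: cut_compact.
have [a [b [Ca Cb ha hb ->]]] := width_ex y (cb_nonempty cb) cC.
have [ae [be [Cae Cbe hae hbe ->]]] := width_ex y Ce0 cCe.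
have inCe : forall z, C z -> Ce (t *: x0 + (1 - t) *: z).
  move=> z Cz; split; first by apply: cvx => //; rewrite t0 t1.
  rewrite /= dot_comb; have := hc z Cz; have : 0 <= 1 - t by lra.
  nra.
have h1 := hae _ (inCe a Ca); have h2 := hbe _ (inCe b Cb).
rewrite !dot_comb in h1 h2; lra.
Qed.

Lemma dot_suml (I : Type) (r : seq I) (P : pred I) (F : I -> V) y :
  dot (\sum_(i <- r | P i) F i) y = \sum_(i <- r | P i) dot (F i) y.
Proof.
elim: r => [|i r IH]; first by rewrite !big_nil dot0l.
by rewrite !big_cons; case: (P i); rewrite ?dotDl IH.
Qed.

Lemma dot_unit (j : 'I_d) y : dot (\row_k ((k == j)%:R : R)) y = y ord0 j.
Proof.
rewrite /dot (bigD1 j) //= big1 ?addr0; first by rewrite mxE eqxx mul1r.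
by move=> k kj; rewrite mxE (negbTE kj) mul0r.
Qed.

Lemma span_ws (L : set V) : is_lattice L -> exists ws : seq V,
  (forall w, w \in ws -> L w) /\
  (forall y1 y2, (forall w, w \in ws -> dot w y1 = dot w y2) -> y1 = y2).
Proof.
move=> [_ _ _ hspan].
have key : forall s : seq 'I_d, exists ws : seq V, (forall w, w \in ws -> L w) /\
    forall j, j \in s -> forall y1 y2,
      (forall w, w \in ws -> dot w y1 = dot w y2) -> y1 ord0 j = y2 ord0 j.
  elim => [|j s [ws [Lws IH]]]; first by exists [::]; split.
  have [n [c [w [Lw ej]]]] := hspan (\row_k ((k == j)%:R : R)).
  exists ([seq w i | i <- enum 'I_n] ++ ws); split.
    move=> v; rewrite mem_cat => /orP[/mapP [i _ ->]|]; [exact: Lw | exact: Lws].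
  move=> j'; rewrite in_cons => /orP[/eqP -> | j's] y1 y2 H.
    rewrite -!dot_unit ej !dot_suml; apply: eq_bigr => i _; rewrite !dotZl H //.
    by rewrite mem_cat; apply/orP; left; apply: map_f; rewrite mem_enum.
  apply: IH => // v vws; apply: H; by rewrite mem_cat vws orbT.
have [ws [Lws H]] := key (enum 'I_d).
exists ws; split => // y1 y2 h; apply/rowP => j.
by apply: H => //; rewrite mem_enum.
Qed.

Lemma fin_uniform (T : finType) (Q : T -> R -> Prop) :
  (forall k, exists2 e : R, 0 < e & forall e', 0 < e' <= e -> Q k e') ->
  exists2 e : R, 0 < e & forall k e', 0 < e' <= e -> Q k e'.
Proof.
move=> H.
have : forall s : seq T, exists2 e : R, 0 < e &
    forall k, k \in s -> forall e', 0 < e' <= e -> Q k e'.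
  elim => [|k s [e1 e10 IH]]; first by exists 1.
  have [e2 e20 H2] := H k.
  exists (Num.min e1 e2); first by rewrite lt_min e10 e20.
  move=> k'; rewrite in_cons => /orP[/eqP -> | ks] e' /andP[e'0]; rewrite le_min => /andP[h1 h2].
    by apply: H2; rewrite e'0 h2.
  by apply: IH => //; rewrite e'0 h1.
move=> /(_ (enum T)) [e e0 He]; exists e => // k e' he'.
by apply: He => //; rewrite mem_enum.
Qed.

Lemma dir_bound C (M : R) (w : V) : convex_body C ->
  exists K : R, forall y, width_dir C y <= M -> `|dot w y| <= K.
Proof.
move=> cb; have [_ cC [x0 ix0]] := cb.
have [s s0 [Cp Cm]] := interior_dir w ix0.
exists (M / (2 * s)) => y hW.
have [a [b [Ca Cb ha hb W]]] := width_ex y (cb_nonempty cb) cC.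
have h1 := ha _ Cp; have h2 := ha _ Cm; have h3 := hb _ Cp; have h4 := hb _ Cm.
rewrite W in hW.
rewrite !dotDr !dotNr !dotZr in h1 h2 h3 h4.
have s2 : 0 < 2 * s by rewrite mulr_gt0.
rewrite ler_pdivlMr // -{1}(gtr0_norm s2) -normrM dotC ler_norml; apply/andP; split; nra.
Qed.

Lemma bound_list C (M : R) (ws : seq V) : convex_body C ->
  exists K : R, forall w, w \in ws -> forall y, width_dir C y <= M -> `|dot w y| <= K.
Proof.
move=> cb; elim: ws => [|w ws [K IH]]; first by exists 0.
have [Kw HK] := dir_bound M w cb.
exists (Num.max K Kw) => v; rewrite in_cons => /orP[/eqP -> | vws] y hy; rewrite le_max.
  by rewrite HK // orbT.
by rewrite IH.
Qed.

Lemma uniform_S (L : set V) C (P : V -> R -> Prop) (S : set V) (M : R) :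
  is_lattice L -> convex_body C ->
  (forall y, S y -> dual_lattice L y /\ width_dir C y <= M) ->
  (forall y, S y -> exists2 e : R, 0 < e & forall e', 0 < e' <= e -> P y e') ->
  exists2 e : R, 0 < e & forall y, S y -> forall e', 0 < e' <= e -> P y e'.
Proof.
move=> lat cb hS hP.
have [ws [Lws injws]] := span_ws lat.
have [K HK] := bound_list M ws cb.
pose Kn := Num.bound `|K|.
have HKn : `|K| < Kn%:R by apply: archi_boundP.
pose m := size ws.
pose Match (tau : {ffun 'I_m -> 'I_(Kn.*2).+1}) (y : V) :=
  forall k : 'I_m, dot ws`_k y = (tau k : nat)%:R - Kn%:R.
have ex_tau : forall y, S y -> exists tau, Match tau y.
  move=> y Sy; have [dy hW] := hS y Sy.
  have [f hf] : {f : 'I_m -> int & forall k : 'I_m, dot ws`_k y = (f k)%:~R}.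
    apply: (@choice _ _ (fun (k : 'I_m) (z : int) => dot ws`_k y = z%:~R)) => k.
    by apply: dy; apply: Lws; apply: mem_nth.
  exists [ffun k : 'I_m => (inord (absz (f k + Kn%:Z)) : 'I_(Kn.*2).+1)] => k; rewrite ffunE.
  have hb : `|(f k)%:~R : R| < Kn%:R.
    rewrite -hf; apply: (le_lt_trans _ HKn); apply: (le_trans _ (ler_norm K)).
    by apply: HK => //; apply: mem_nth.
  rewrite -intr_norm pmulrn ltr_int in hb.
  move: hb; rewrite ltr_norml => /andP[hl hr].
  have h1 : (0 <= f k + Kn%:Z)%R by lia.
  have h2 : (absz (f k + Kn%:Z)%R < (Kn.*2).+1)%N by lia.
  rewrite hf inordK // natr_absz ger0_norm // intrD pmulrn; ring.
have uniq_tau : forall tau y1 y2, Match tau y1 -> Match tau y2 -> y1 = y2.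
  move=> tau y1 y2 h1 h2; apply: injws => w wws.
  have ik : (index w ws < m)%N by rewrite index_mem.
  have := h1 (Ordinal ik); have := h2 (Ordinal ik); rewrite /= nth_index //.
  by move=> -> ->.
pose Q tau e := forall y, S y -> Match tau y -> P y e.
have [e e0 He] : exists2 e : R, 0 < e & forall k e', 0 < e' <= e -> Q k e'.
  apply: fin_uniform => tau; case: (pselect (exists y, S y /\ Match tau y)) => [[y0 [Sy0 My0]] | nex].
    have [e e0 He] := hP y0 Sy0; exists e => // e' he' y Sy My.
    by rewrite (uniq_tau tau y y0 My My0); apply: He.
  by exists 1 => // e' _ y Sy My; exfalso; apply: nex; exists y.
exists e => // y Sy e' he'; have [tau Mt] := ex_tau y Sy.
exact: He tau e' he' y Sy Mt.
Qed.

Lemma good_pts C u (c e : R) y a b : compact C -> C a -> C b ->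
  (forall x, C x -> dot y x <= dot y a) -> (forall x, C x -> dot y b <= dot y x) ->
  dot u a <= c - e -> dot u b <= c - e ->
  width_dir C y <= width_dir (C `&` [set x | dot u x <= c - e]) y.
Proof.
move=> cC Ca Cb ha hb ua ub.
rewrite (@width_eq C y a b Ca Cb ha hb).
have Ce0 : (C `&` [set x | dot u x <= c - e]) !=set0 by exists a.
have [ae [be [Cae Cbe hae hbe ->]]] := width_ex y Ce0 (cut_compact u (c - e) cC).
have h1 : dot y a <= dot y ae by apply: hae.
have h2 : dot y be <= dot y b by apply: hbe.
lra.
Qed.

Lemma dual_opp (L : set V) y : dual_lattice L y -> dual_lattice L (- y).
Proof.
move=> dy x Lx; have [z hz] := dy x Lx; exists (- z).
by rewrite dotNr hz mulrNz.
Qed.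

Lemma width_direction_opp (L : set V) C y : C !=set0 -> compact C ->
  width_direction L C y -> width_direction L C (- y).
Proof.
move=> C0 cC [dy y0 wy]; split; first exact: dual_opp.
  by rewrite oppr_eq0.
by rewrite widthN.
Qed.

Lemma dir12 (L : set V) C : is_lattice L -> convex_body C -> lattice_reduced L C ->
  forall p, exposed_point C p -> exists y, width_direction L C y /\
     (forall x, C x -> x != p -> dot y x < dot y p).
Proof.
move=> lat cb red p ex.
have Cp := exposed_in ex.
move: ex => [u [c [[u0 hc _] E]]].
have onH : forall x, C x -> dot u x = c -> x = p.
  by move=> x Cx hx; have : (C `&` [set x | dot u x = c]) x by []; rewrite E.
have up : dot u p = c by have : [set p] p by []; rewrite -E => -[].
apply: contrapT => Hn.
have Hn' : forall y, width_direction L C y ->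
    exists x, [/\ C x, x != p & dot y p <= dot y x].
  move=> y wy; apply: contrapT => nx; apply: Hn; exists y; split => // x Cx xp.
  rewrite ltNge; apply/negP => le; apply: nx; by exists x.
have [cvx cC [x0 ix0]] := cb.
have Cx0 : C x0 by exact: nbhs_singleton.
have C0 := cb_nonempty cb.
set g := c - dot u x0.
have g0 : 0 < g.
  have [s s0 [Cp' _]] := interior_dir u ix0.
  have := hc _ Cp'; rewrite dotDr dotZr /g => h.
  have := dot_gt0 u u0; nra.
pose Ce e := C `&` [set x | dot u x <= c - e].
pose Y := [set y : V | dual_lattice L y /\ y != 0].
suff [e [e0 eg eqw]] : exists e, [/\ 0 < e, e < g & lattice_width L (Ce e) = lattice_width L C].
  apply: (red (Ce e)).
  - by apply: (@cut_body C u c e x0 cb ix0); rewrite /g in eg; lra.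
  - split; first by move=> x [].
    by move=> /(_ p Cp) [_ /=]; rewrite up; lra.
  - exact: eqw.
have g2 : 0 < g / 2 by rewrite divr_gt0.
have g2g : g / 2 < g by rewrite ltr_pdivrMr //; lra.
case: (pselect (exists y, Y y)) => [[y1 Yy1] | nY]; last first.
  exists (g / 2); split => //.
  have emp : forall D : set V, lattice_width L D = inf set0.
    move=> D; rewrite /lattice_width; congr inf; apply/seteqP; split => // r [y Yy _].
    by apply: nY; exists y.
  by rewrite !emp.
set w := lattice_width L C.
have hw : forall y, Y y -> w <= width_dir C y.
  by move=> y [dy y0]; apply: lw_le.
have w0 : 0 <= w.
  rewrite /w /lattice_width; apply: lb_le_inf; first by exists (width_dir C y1), y1.
  by move=> _ [y _ <-]; apply: width_ge0.
have cCe : forall e, compact (Ce e) by move=> e; apply: cut_compact.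
have Ce0 : forall e, e <= g -> Ce e !=set0.
  by move=> e eg; exists x0; split => //=; rewrite /g in eg; lra.
have shrinkG : forall y e, 0 < e <= g -> (1 - e / g) * width_dir C y <= width_dir (Ce e) y.
  move=> y e /andP[e0 eg].
  have t01 : 0 <= e / g <= 1.
    by apply/andP; split; [rewrite divr_ge0 // ltW | rewrite ler_pdivrMr // mul1r].
  have := @shrink C u c (e / g) x0 y cb Cx0 hc t01.
  by rewrite -/g mulfVK // gt_eqF.
pose Good y e := w <= width_dir (Ce e) y.
have claimA : forall y, Y y -> 2 * w <= width_dir C y ->
    forall e, 0 < e <= g / 2 -> Good y e.
  move=> y Yy hW e /andP[e0 eg2].
  have eg : e <= g by lra.
  have := shrinkG y e (andb_true_intro (conj e0 eg)).
  have : e / g <= 1 / 2 by rewrite ler_pdivrMr // mulrC mulrA mulr1 -ler_pdivrMr //; lra.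
  have := width_ge0 y C0 cC.
  rewrite /Good; nra.
have claimAll : forall y, Y y ->
    exists2 ey : R, 0 < ey & forall e, 0 < e <= ey -> Good y e.
  move=> y Yy; have [dy y0] := Yy.
  have := hw y Yy; rewrite le_eqVlt => /orP[/eqP hWe | hWgt].
    have wy : width_direction L C y by split => //; rewrite -hWe.
    have [a [b [Ca Cb ha hb _]]] := width_ex y C0 cC.
    have [a' [Ca' a'p ha']] : exists a', [/\ C a', a' != p &
        forall x, C x -> dot y x <= dot y a'].
      case: (eqVneq a p) => [ap | anp]; last by exists a.
      have [x [Cx xp hx]] := Hn' y wy; exists x; split => // z Cz.
      by apply: le_trans (ha z Cz) _; rewrite ap.
    have [b' [Cb' b'p hb']] : exists b', [/\ C b', b' != p &
        forall x, C x -> dot y b' <= dot y x].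
      case: (eqVneq b p) => [bp | bnp]; last by exists b.
      have [x [Cx xp hx]] := Hn' (- y) (width_direction_opp C0 cC wy).
      rewrite !dotNl lerN2 in hx.
      exists x; split => // z Cz.
      by apply: le_trans _ (hb z Cz); rewrite bp.
    have ua : dot u a' < c.
      rewrite lt_neqAle hc // andbT; apply/eqP => h.
      by move: a'p; rewrite (onH _ Ca' h) eqxx.
    have ub : dot u b' < c.
      rewrite lt_neqAle hc // andbT; apply/eqP => h.
      by move: b'p; rewrite (onH _ Cb' h) eqxx.
    exists (Num.min (c - dot u a') (c - dot u b')); first by rewrite lt_min !subr_gt0 ua ub.
    move=> e /andP[e0]; rewrite le_min => /andP[h1 h2].
    rewrite /Good hWe; apply: (@good_pts C u c e y a' b') => //; lra.
  set W := width_dir C y in hWgt *.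
  have W0 : 0 < W by apply: le_lt_trans hWgt.
  set ty := (W - w) / (2 * W).
  have tyW : ty * (2 * W) = W - w by rewrite /ty mulfVK // gt_eqF // mulr_gt0.
  have ty0 : 0 < ty by rewrite /ty divr_gt0 ?subr_gt0 // mulr_gt0.
  have ty2 : ty <= 1 / 2 by nra.
  exists (ty * g); first by rewrite mulr_gt0.
  move=> e /andP[e0 eyg].
  have eg : e <= g by nra.
  have := shrinkG y e (andb_true_intro (conj e0 eg)).
  have : e / g <= ty by rewrite ler_pdivrMr.
  rewrite /Good -/W; nra.
have [e1 e10 He1] := @uniform_S L C Good [set y | Y y /\ width_dir C y <= 2 * w]
    (2 * w) lat cb (fun y hy => conj hy.1.1 hy.2)
    (fun y hy => claimAll y hy.1).
set e := Num.min e1 (g / 2).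
have e0 : 0 < e by rewrite lt_min e10 g2.
have ee1 : e <= e1 by rewrite ge_min lexx.
have eg2 : e <= g / 2 by rewrite ge_min lexx orbT.
have goodall : forall y, Y y -> Good y e.
  move=> y Yy; case: (leP (width_dir C y) (2 * w)) => hW.
    by apply: He1 => //; rewrite e0.
  by apply: claimA => //; [exact: ltW | rewrite e0].
exists e; split => //; first by lra.
have Cee : Ce e !=set0 by apply: Ce0; lra.
apply/eqP; rewrite eq_le; apply/andP; split.
  rewrite /w /lattice_width; apply: lb_le_inf; first by exists (width_dir C y1), y1.
  move=> _ [y [dy y0] <-]; apply: le_trans (lw_le Cee (cCe e) dy y0) _.
  by apply: width_sub => // x [].
rewrite /lattice_width; apply: lb_le_inf; first by exists (width_dir (Ce e) y1), y1.
by move=> _ [y Yy <-]; apply: goodall.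
Qed.

End S.

Theorem proposition3p1 (R : realType) (d : nat) (C L : set 'rV[R]_d) :
  convex_body C -> is_lattice L ->
  (lattice_reduced L C <->
   (forall p, exposed_point C p ->
      exists y, width_direction L C y /\
        (forall x, C x -> x != p -> dot y x < dot y p))).
Proof.
move=> cb lat; split.
  by move=> red; apply: dir12.
exact: dir21.
Qed.
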